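(* Let $D$ be the standard contact $(2n-1)$-ball and $p_\pm\in\partial D$ its poles. Let $\Delta=D^{2n-2}\times[0,a]$ ($a>0$) be the Weinstein cylinder over the unit ball $D^{2n-2}\subset\mathbb{R}^{2n-2}$, with contact structure $\ker(\lambda_{st}+dz)$, and let $\partial_+\Delta=D^{2n-2}\times a$. Then for every $\epsilon>0$ there exists a contact embedding $h:\Delta\to D$ such that $h(\partial_+\Delta)\subset\partial D$, the set $\partial D\setminus h(\partial_+\Delta)$ is contained in the $\epsilon$-neighborhood of the pole $p_-$, and $D\setminus h(\Delta)$ is contained in the $\epsilon$-neighborhood of $\partial D$.
   Context: The standard contact $(2n-1)$-ball is the hemisphere $D=S^{2n-1}\cap\{y_n\ge0\}\subset\mathbb{R}^{2n}$ with contact structure $\ker\big(\sum_{j=1}^n(x_jdy_j-y_jdx_j)|_{S^{2n-1}}\big)$; its boundary is $S^{2n-1}\cap\{y_n=0\}$ and its poles are $p_\pm=\{x_n=\pm1$, all other coordinates $0\}$. Distances are taken with respect to the metric induced from $\mathbb{R}^{2n}$. On $\mathbb{R}^{2n-2}$, $\lambda_{st}=\sum_{j=1}^{n-1}(x_jdy_j-y_jdx_j)$, and $z$ is the coordinate on $[0,a]$. *)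

(* Defs.v *)
From HB Require Import structures.
From mathcomp Require Import all_boot all_order all_algebra.
From mathcomp Require Import all_classical all_reals all_analysis.
Unset Printing Implicit Defensive.
Import Order.TTheory GRing.Theory Num.Theory.
Import numFieldNormedType.Exports.
Local Open Scope classical_set_scope.
Local Open Scope ring_scope.

Fixpoint Ck {R : realType} {V W : normedModType R} (k : nat) (U : set V)
  (f : V -> W) : Prop :=
  match k with
  | 0 => forall x, U x -> {for x, continuous f}
  | k'.+1 => (forall x, U x -> differentiable f x) /\
             (forall v : V, Ck k' U (fun y => 'D_v f y))
  end.

Definition smooth_on {R : realType} {V W : normedModType R} (U : set V)
  (f : V -> W) : Prop := forall k, Ck k U f.

Definition sqnorm {R : realType} {k : nat} (v : 'rV[R]_k) : R :=
  \sum_(i < k) (v ord0 i) ^+ 2.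
Definition eucl_dist {R : realType} {k : nat} (v w : 'rV[R]_k) : R :=
  Num.sqrt (sqnorm (v - w)).

(* R^{2n} with n = m.+1, as 'rV_(n + n): x_j = first block, y_j = second *)
Definition xc {R : realType} {n : nat} (p : 'rV[R]_(n + n)) (j : 'I_n) : R :=
  p ord0 (lshift n j).
Definition yc {R : realType} {n : nat} (p : 'rV[R]_(n + n)) (j : 'I_n) : R :=
  p ord0 (rshift n j).

Definition alpha {R : realType} {n : nat} (p w : 'rV[R]_(n + n)) : R :=
  \sum_(j < n) (xc p j * yc w j - yc p j * xc w j).

Definition sphere {R : realType} (n : nat) : set 'rV[R]_(n + n) :=
  [set p | sqnorm p = 1].

(* standard contact ball D (n = m.+1), its boundary and south pole *)
Definition stdD {R : realType} (m : nat) : set 'rV[R]_(m.+1 + m.+1) :=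
  [set p | sqnorm p = 1 /\ 0 <= yc p ord_max].
Definition bdD {R : realType} (m : nat) : set 'rV[R]_(m.+1 + m.+1) :=
  [set p | sqnorm p = 1 /\ yc p ord_max = 0].
Definition pole_minus {R : realType} (m : nat) : 'rV[R]_(m.+1 + m.+1) :=
  \row_(i < m.+1 + m.+1) (if i == lshift m.+1 ord_max then -1 else 0).

(* R^{2n-1} = R^{2m} x R as 'rV_((m + m) + 1); u = first block, z = last *)
Definition ucomp {R : realType} {m : nat} (q : 'rV[R]_((m + m) + 1))
  : 'rV[R]_(m + m) := \row_i q ord0 (lshift 1 i).
Definition zc {R : realType} {m : nat} (q : 'rV[R]_((m + m) + 1)) : R :=
  q ord0 (rshift (m + m) ord0).

Definition cylD {R : realType} (m : nat) (a : R) : set 'rV[R]_((m + m) + 1) :=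
  [set q | sqnorm (ucomp q) <= 1 /\ 0 <= zc q <= a].
Definition cyl_top {R : realType} (m : nat) (a : R) : set 'rV[R]_((m + m) + 1) :=
  [set q | sqnorm (ucomp q) <= 1 /\ zc q = a].

Definition beta {R : realType} {m : nat} (q w : 'rV[R]_((m + m) + 1)) : R :=
  alpha (ucomp q) (ucomp w) + zc w.

Definition contact_embedding {R : realType} (m : nat) (a : R)
  (h : 'rV[R]_((m + m) + 1) -> 'rV[R]_(m.+1 + m.+1)) : Prop :=
  [/\ exists U : set 'rV[R]_((m + m) + 1), open U /\ cylD m a `<=` U /\ smooth_on U h,
      {in cylD m a &, injective h},
      (forall q, cylD m a q -> forall w, 'D_w h q = 0 -> w = 0),
      h @` cylD m a `<=` stdD m &
      (forall q, cylD m a q -> forall w,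
          alpha (h q) ('D_w h q) = 0 <-> beta q w = 0)].

(* Main.v *)
Require Import Defs.
From HB Require Import structures.
From mathcomp Require Import all_boot all_order all_algebra.
From mathcomp Require Import all_classical all_reals all_analysis.
From mathcomp Require Import ring lra.
Import Order.TTheory GRing.Theory Num.Theory.
Import numFieldNormedType.Exports.
Local Open Scope classical_set_scope.
Local Open Scope ring_scope.

Section AST.
Variable R : realType.
Variable N : nat.
Notation V := 'rV[R]_N.

Inductive ex : Type :=
 | eC of R | eV of 'I_N | eA of ex & ex | eM of ex & ex | eI of ex.

Fixpoint ev (e : ex) (q : V) : R :=
  match e with
  | eC r => r
  | eV i => q ord0 i
  | eA a b => ev a q + ev b q
  | eM a b => ev a q * ev b q
  | eI a => (ev a q)^-1
  end.

Fixpoint der (e : ex) (w : V) : ex :=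
  match e with
  | eC _ => eC 0
  | eV i => eC (w ord0 i)
  | eA a b => eA (der a w) (der b w)
  | eM a b => eA (eM a (der b w)) (eM b (der a w))
  | eI a => eM (eC (-1)) (eM (eM (eI a) (eI a)) (der a w))
  end.

Fixpoint wf (e : ex) : Prop :=
  match e with
  | eC _ | eV _ => True
  | eA a b | eM a b => wf a /\ wf b
  | eI a => wf a /\ forall q, ev a q != 0
  end.

Lemma coord_derive (i : 'I_N) (q w : V) :
  'D_w (fun x : V => x ord0 i) q = w ord0 i.
Proof.
have d : derivable (fun x : V => x) q w by exact: derivable_id.
have e := derive_mx d; rewrite derive_id in e.
by rewrite [in RHS]e mxE.
Qed.

Lemma ev_diff (e : ex) : wf e -> forall q, differentiable (ev e) q.
Proof.
elim: e => [r|i|a iha b ihb|a iha b ihb|a iha] /=.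
- by move=> _ q; exact: differentiable_cst.
- by move=> _ q; exact: differentiable_coord.
- by move=> [wa wb] q; exact: (differentiableD (iha wa q) (ihb wb q)).
- by move=> [wa wb] q; exact: (differentiableM (iha wa q) (ihb wb q)).
- by move=> [wa nz] q; exact: (differentiableV (iha wa q) (nz q)).
Qed.

Arguments ev_diff {e}.
Lemma dd_der {f : V -> R} {q : V} (w : V) : differentiable f q -> derivable f q w.
Proof. by move=> h; apply: diff_derivable. Qed.

Lemma ev_der (e : ex) : wf e -> forall q w, 'D_w (ev e) q = ev (der e w) q.
Proof.
elim: e => [r|i|a iha b ihb|a iha b ihb|a iha] /=.
- by move=> _ q w; exact: (derive_cst r q w).
- by move=> _ q w; exact: coord_derive.
- move=> [wa wb] q w.
  have := @deriveD _ _ _ _ _ q w (dd_der w (ev_diff wa q)) (dd_der w (ev_diff wb q)).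
  by move=> ->; rewrite iha // ihb.
- move=> [wa wb] q w.
  have := @deriveM _ _ _ _ q w (dd_der w (ev_diff wa q)) (dd_der w (ev_diff wb q)).
  by move=> ->; rewrite iha // ihb.
- move=> [wa nz] q w.
  have := @deriveV _ _ _ q w (nz q) (dd_der w (ev_diff wa q)).
  move=> ->; rewrite iha //.
  change (- (ev a q ^- 2) * ev (der a w) q = -1 * ((ev a q)^-1 / ev a q * ev (der a w) q)).
  by rewrite expr2 invfM; ring.
Qed.

Lemma wf_der (e : ex) : wf e -> forall w, wf (der e w).
Proof.
elim: e => [r|i|a iha b ihb|a iha b ihb|a iha] //=.
- by move=> [wa wb] w; split; [apply: iha|apply: ihb].
- by move=> [wa wb] w; split; split => //; [apply: ihb|apply: iha].
- by move=> [wa nz] w; split => //; split; [split; split|apply: iha].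
Qed.

Lemma ev_Ck (k : nat) : forall e, wf e -> Ck k setT (ev e).
Proof.
elim: k => [|k ih] e we /=.
- by move=> q _; apply: differentiable_continuous; exact: ev_diff.
- split; first by move=> q _; exact: ev_diff.
  move=> v.
  have -> : (fun y => 'D_v (ev e) y) = ev (der e v).
    by apply: funext => y; exact: ev_der.
  by apply: ih; exact: wf_der.
Qed.


Section Vec.
Variable M : nat.
Variable E : 'I_M -> ex.

Definition hv (q : V) : 'rV[R]_M := \row_k ev (E k) q.

Lemma hv_sum : hv = \sum_(k < M) (fun q => ev (E k) q *: (delta_mx 0 k : 'rV[R]_M)).
Proof.
rewrite fct_sumE; apply: funext => q.
rewrite [LHS]row_sum_delta; apply: eq_bigr => k _.
by rewrite /hv mxE.
Qed.

Hypothesis wfE : forall k, wf (E k).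

Lemma hv_diff q : differentiable hv q.
Proof.
rewrite hv_sum; apply: differentiable_sum => k.
apply: differentiableZl; exact: ev_diff.
Qed.

Lemma hv_der q w : 'D_w hv q = \row_k ev (der (E k) w) q.
Proof.
have d : derivable hv q w by apply: diff_derivable; exact: hv_diff.
rewrite (derive_mx d); apply/rowP => k; rewrite !mxE.
have -> : (fun t => hv t ord0 k) = ev (E k) by apply: funext => t; rewrite mxE.
by rewrite ev_der.
Qed.
End Vec.
Arguments hv {M}.
Arguments hv_diff {M E}.
Arguments hv_der {M E}.

Lemma hv_Ck M k : forall E : 'I_M -> ex, (forall k, wf (E k)) -> Ck k setT (hv E).
Proof.
elim: k => [|k ih] E wE /=.
- by move=> q _; apply: differentiable_continuous; exact: hv_diff.
- split; first by move=> q _; exact: hv_diff.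
  move=> v.
  have -> : (fun y => 'D_v (hv E) y) = hv (fun k => der (E k) v).
    by apply: funext => y; rewrite hv_der.
  by apply: ih => j; exact: wf_der.
Qed.

End AST.
Arguments eC {R N}. Arguments eV {R N}. Arguments eA {R N}. Arguments eM {R N}. Arguments eI {R N}.
Arguments ev {R N}. Arguments der {R N}. Arguments wf {R N}.
Arguments hv {R N M}. Arguments ev_der {R N e}. Arguments wf_der {R N e}.
Arguments hv_der {R N M E}. Arguments hv_diff {R N M E}. Arguments hv_Ck {R N M}.


Section Constr.
Variable R : realType.
Variable m : nat.
Variables (a c : R).
Notation N := ((m + m) + 1)%N.
Notation V := 'rV[R]_N.
Notation ex := (ex R N).

Definition ix (j : 'I_m) : 'I_N := lshift 1 (lshift m j).
Definition iy (j : 'I_m) : 'I_N := lshift 1 (rshift m j).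
Definition iz : 'I_N := rshift (m + m) ord0.

Definition vE : ex := locked (\big[@eA R N/eC 0]_(i < m + m) eM (eV (lshift 1 i)) (eV (lshift 1 i))).
Definition tE : ex := eM (eC (2 * c ^+ 2)) (eA (eC a) (eM (eC (-1)) (eV iz))).
Definition VE : ex := eM (eC (c ^+ 2)) vE.
Definition PE : ex := eA (eC 1) VE.
Definition QE : ex := eA (eM tE tE) (eM PE PE).
Definition IQ : ex := eI QE.
Definition XE (j : 'I_m) : ex :=
  eM (eC 2) (eM (eA (eM (eM (eC c) (eV (ix j))) tE) (eM (eM (eC (-c)) (eV (iy j))) PE)) IQ).
Definition YE (j : 'I_m) : ex :=
  eM (eC 2) (eM (eA (eM (eM (eC (-c)) (eV (iy j))) tE) (eM (eC (-1)) (eM (eM (eC c) (eV (ix j))) PE))) IQ).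
Definition XnE : ex := eM (eA (eC 1) (eM (eC (-1)) (eA (eM VE VE) (eM tE tE)))) IQ.
Definition YnE : ex := eM (eM (eC 2) tE) IQ.

Definition EE (k : 'I_(m.+1 + m.+1)) : ex :=
  match fintype.split k with
  | inl j => if unlift ord_max j is Some j' then XE j' else XnE
  | inr j => if unlift ord_max j is Some j' then YE j' else YnE
  end.

Definition hh := hv EE.

Lemma ev_vE q : ev vE q = sqnorm (ucomp q).
Proof.
rewrite /vE -lock (big_morph (fun e => ev e q) (id1 := 0) (op1 := +%R)) //.
by rewrite /sqnorm; apply: eq_bigr => i _; rewrite /ucomp mxE expr2.
Qed.

Definition duu (q w : V) : R := \sum_(i < m + m) (q ord0 (lshift 1 i) * w ord0 (lshift 1 i)) * 2.

Lemma ev_dvE q w : ev (der vE w) q = duu q w.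
Proof.
rewrite /vE -lock (big_morph (fun e => der e w) (id1 := eC 0) (op1 := @eA R N)) //.
rewrite (big_morph (fun e => ev e q) (id1 := 0) (op1 := +%R)) //.
by rewrite /duu; apply: eq_bigr => i _ /=; ring.
Qed.

Lemma sqnorm_ge0 {k} (u : 'rV[R]_k) : 0 <= sqnorm u.
Proof. by rewrite /sqnorm; apply: sumr_ge0 => i _; exact: sqr_ge0. Qed.

Lemma ev_QE_pos q : 1 <= ev QE q.
Proof.
rewrite /= ev_vE.
have h0 := sqnorm_ge0 (ucomp q).
set u := sqnorm _.
have hc : 0 <= c ^+ 2 by exact: sqr_ge0.
have hu : 0 <= c ^+ 2 * u by exact: mulr_ge0.
set T := (X in X * X + _).
have hT : 0 <= T * T by rewrite -expr2; exact: sqr_ge0.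
set P := (1 + _).
have hP : 1 <= P by rewrite /P lerDl.
have : 1 <= P * P by rewrite -[1]mulr1; apply: ler_pM.
lra.
Qed.

Lemma ev_QE_neq0 q : ev QE q != 0.
Proof. by have := ev_QE_pos q; apply: contraTneq => ->; rewrite ler10. Qed.

Definition xq (q : V) j := q ord0 (ix j).
Definition yq (q : V) j := q ord0 (iy j).

Lemma perj q w j :
  ev (XE j) q * ev (der (YE j) w) q - ev (YE j) q * ev (der (XE j) w) q =
  -4*c^+2/(ev QE q) * (xq q j * yq w j - yq q j * xq w j)
  - 4*c^+2*(xq q j ^+2 + yq q j ^+2)*(ev tE q * ev (der VE w) q - (1 + ev VE q) * ev (der tE w) q)/(ev QE q)^+2.
Proof.
have hQ := ev_QE_neq0 q.
rewrite /= in hQ *.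
rewrite /xq /yq.
field.
exact hQ.
Qed.


Lemma nthterm q w :
  ev XnE q * ev (der YnE w) q - ev YnE q * ev (der XnE w) q =
  2 * ev (der tE w) q / ev QE q + 4 * ev VE q * (ev tE q * ev (der VE w) q - (1 + ev VE q) * ev (der tE w) q)/(ev QE q)^+2.
Proof.
have hQ := ev_QE_neq0 q.
rewrite /= in hQ *.
field.
exact hQ.
Qed.

Lemma dtE q w : ev (der tE w) q = - 2 * c^+2 * zc w.
Proof. rewrite /= /zc /iz; ring. Qed.

Lemma VE_ev q : ev VE q = c^+2 * sqnorm (ucomp q).
Proof. by rewrite /= ev_vE. Qed.

Lemma split_l n1 n2 (j : 'I_n1) : fintype.split (lshift n2 j) = inl j.
Proof. exact: (unsplitK (inl j)). Qed.
Lemma split_r n1 n2 (j : 'I_n2) : fintype.split (rshift n1 j) = inr j.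
Proof. exact: (unsplitK (inr j)). Qed.
Lemma unlift_w n (i : 'I_n) : unlift ord_max (widen_ord (leqnSn n) i) = Some i.
Proof.
have -> : widen_ord (leqnSn n) i = lift ord_max i by apply: ord_inj; rewrite lift_max.
exact: liftK.
Qed.

Lemma sq_split q : sqnorm (ucomp q) = \sum_(j < m) (xq q j ^+ 2 + yq q j ^+ 2).
Proof.
rewrite /sqnorm big_split_ord /= big_split /=.
by congr (_ + _); apply: eq_bigr => j _; rewrite /ucomp mxE.
Qed.

Lemma alpha_u q w : alpha (ucomp q) (ucomp w) = \sum_(j < m) (xq q j * yq w j - yq q j * xq w j).
Proof.
by rewrite /alpha; apply: eq_bigr => j _; rewrite /xc /yc /ucomp !mxE.
Qed.

Lemma wf_vE : wf vE.
Proof. by rewrite /vE -lock; elim/big_ind: _ => //= i _. Qed.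

Lemma wfEE k : wf (EE k).
Proof.
rewrite /EE; case: (fintype.split k) => j; case: (unlift _ j) => [j'|];
  do !split; try exact: wf_vE; move=> q; exact: ev_QE_neq0.
Qed.

Lemma hh_ev q k : hh q ord0 k = ev (EE k) q.
Proof. by rewrite /hh /hv mxE. Qed.

Lemma Dhh_ev q w k : 'D_w hh q ord0 k = ev (der (EE k) w) q.
Proof. by rewrite /hh (hv_der wfEE) mxE. Qed.

Lemma sum_fact (k B D : R) (F : 'I_m -> R) :
  \sum_(i < m) - (k * F i * B / D) = - (k * (\sum_(i < m) F i) * B / D).
Proof. by rewrite sumrN; congr (- _); rewrite mulr_sumr !mulr_suml. Qed.

Lemma contact q w : alpha (hh q) ('D_w hh q) = -4 * c^+2 / ev QE q * beta q w.
Proof.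
rewrite /alpha big_ord_recr /=.
rewrite /xc /yc !hh_ev !Dhh_ev /EE !split_l !split_r unlift_none.
under eq_bigr => j _ do rewrite !hh_ev !Dhh_ev /EE !split_l !split_r unlift_w perj.
rewrite nthterm.
rewrite big_split /= -!mulr_sumr sum_fact -sq_split /beta alpha_u ev_vE /zc.
have hQ := ev_QE_neq0 q.
rewrite /= ev_vE in hQ.
rewrite -/iz.
field.
exact hQ.
Qed.


Lemma coord0 (w : V) : (forall j, xq w j = 0) -> (forall j, yq w j = 0) -> w ord0 iz = 0 -> w = 0.
Proof.
move=> hx hy hz; apply/rowP => i; rewrite mxE.
rewrite -(splitK i); case: (fintype.split i) => [i'|k] /=.
- rewrite -(splitK i'); case: (fintype.split i') => j /=; [exact: hx|exact: hy].
- by rewrite (ord1 k).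
Qed.

Lemma dtdv q w : ev (der XnE w) q = 0 -> ev (der YnE w) q = 0 ->
  ev (der tE w) q = 0 /\ ev (der VE w) q = 0.
Proof.
move=> h1 h2.
have hQ := ev_QE_neq0 q.
set t := ev tE q; set P := 1 + ev VE q.
have e1 : ev (der tE w) q = - ((t^+2 - P^+2) * ev (der YnE w) q + 2 * t * P * ev (der XnE w) q) / 2.
  rewrite /t /P /=; rewrite /= in hQ; field; exact hQ.
have e2 : ev (der VE w) q = ((t^+2 - P^+2) * ev (der XnE w) q - 2 * t * P * ev (der YnE w) q) / 2.
  rewrite /t /P /=; rewrite /= in hQ; field; exact hQ.
by rewrite e1 e2 h1 h2; split; ring.
Qed.

Lemma mul0_cancel (k x : R) : k != 0 -> k * x = 0 -> x = 0.
Proof. by move=> hk /eqP; rewrite mulf_eq0 (negbTE hk) => /eqP. Qed.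

Hypothesis hc : 0 < c.

Lemma immersion q w : 'D_w hh q = 0 -> w = 0.
Proof.
move=> hD.
have hk : forall k, ev (der (EE k) w) q = 0.
  by move=> k; rewrite -Dhh_ev hD mxE.
have hXn := hk (lshift _ ord_max); have hYn := hk (rshift _ ord_max).
rewrite /EE split_l split_r unlift_none in hXn hYn.
have [ht hv] := dtdv q w hXn hYn.
have c0 : c != 0 by rewrite gt_eqF.
have c2 : c ^+ 2 != 0 by rewrite expf_neq0.
have n2 : (2:R) != 0 by rewrite pnatr_eq0.
have wz : w ord0 iz = 0.
  apply: (@mul0_cancel (- 2 * c^+2)); first by rewrite mulf_neq0 // oppr_eq0.
  by move: ht; rewrite dtE.
have hdv : ev (der vE w) q = 0.
  apply: (@mul0_cancel (c^+2)) => //.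
  by move: hv => /=; rewrite mulr0 addr0.
have hQ := ev_QE_neq0 q.
have key : forall j, ev (der (XE j) w) q = 0 -> ev (der (YE j) w) q = 0 ->
   xq w j = 0 /\ yq w j = 0.
  move=> j h1 h2.
  have e1 : 2 * c * xq w j = ev tE q * ev (der (XE j) w) q - (1 + ev VE q) * ev (der (YE j) w) q.
    rewrite /= /xq /yq hdv wz; rewrite /= in hQ; field; exact hQ.
  have e2 : 2 * c * yq w j = - ev tE q * ev (der (YE j) w) q - (1 + ev VE q) * ev (der (XE j) w) q.
    rewrite /= /xq /yq hdv wz; rewrite /= in hQ; field; exact hQ.
  rewrite h1 h2 !mulr0 subr0 in e1 e2.
  split; apply: (@mul0_cancel (2 * c)); rewrite ?mulf_neq0 //.
apply: coord0 => //.
- move=> j; have h1 := hk (lshift _ (widen_ord (leqnSn m) j)); have h2 := hk (rshift _ (widen_ord (leqnSn m) j)).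
  rewrite /EE split_l split_r unlift_w in h1 h2.
  by case: (key j h1 h2).
- move=> j; have h1 := hk (lshift _ (widen_ord (leqnSn m) j)); have h2 := hk (rshift _ (widen_ord (leqnSn m) j)).
  rewrite /EE split_l split_r unlift_w in h1 h2.
  by case: (key j h1 h2).
Qed.


Definition PX (p : 'rV[R]_(m.+1 + m.+1)) j := p ord0 (lshift m.+1 (widen_ord (leqnSn m) j)).
Definition PY (p : 'rV[R]_(m.+1 + m.+1)) j := p ord0 (rshift m.+1 (widen_ord (leqnSn m) j)).
Definition Pxn (p : 'rV[R]_(m.+1 + m.+1)) := p ord0 (lshift m.+1 (@ord_max m)).
Definition Pyn (p : 'rV[R]_(m.+1 + m.+1)) := p ord0 (rshift m.+1 (@ord_max m)).

Lemma sq_out p : sqnorm p = \sum_(j < m) (PX p j ^+ 2 + PY p j ^+ 2) + (Pxn p ^+ 2 + Pyn p ^+ 2).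
Proof.
rewrite /sqnorm big_split_ord /= !big_ord_recr /= big_split /=.
rewrite /PX /PY /Pxn /Pyn; ring.
Qed.

Lemma sphj q j : ev (XE j) q ^+ 2 + ev (YE j) q ^+ 2 = 4 * c^+2 * (xq q j ^+ 2 + yq q j ^+ 2) / ev QE q.
Proof.
have hQ := ev_QE_neq0 q.
rewrite /= in hQ *; rewrite /xq /yq; field; exact hQ.
Qed.

Lemma sum_fact2 (k D : R) (F : 'I_m -> R) :
  \sum_(i < m) (k * F i / D) = k * (\sum_(i < m) F i) / D.
Proof. by rewrite mulr_sumr !mulr_suml. Qed.

Lemma hh_sphere q : sqnorm (hh q) = 1.
Proof.
rewrite sq_out.
under eq_bigr do rewrite /PX /PY !hh_ev /EE !split_l !split_r unlift_w sphj.
rewrite /Pxn /Pyn !hh_ev /EE !split_l !split_r unlift_none.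
rewrite sum_fact2 -sq_split.
have hQ := ev_QE_neq0 q.
rewrite /= ev_vE in hQ *; field; exact hQ.
Qed.

Lemma ev_YnE q : ev YnE q = 2 * (2 * c^+2 * (a - zc q)) / ev QE q.
Proof. by rewrite /= /zc -/iz mulN1r. Qed.

Lemma hh_Yn q : zc q <= a -> 0 <= Pyn (hh q).
Proof.
move=> hz; rewrite /Pyn hh_ev /EE split_r unlift_none ev_YnE.
have hQ := ev_QE_pos q.
apply: divr_ge0; last by apply: le_trans hQ.
apply: mulr_ge0 => //; apply: mulr_ge0; first by apply: mulr_ge0 => //; exact: sqr_ge0.
by rewrite subr_ge0.
Qed.

Lemma hh_top q : zc q = a -> Pyn (hh q) = 0.
Proof.
move=> hz; rewrite /Pyn hh_ev /EE split_r unlift_none ev_YnE hz subrr.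
by rewrite !mulr0 mul0r.
Qed.


Definition dd p := 1 + Pxn p.
Definition DD p := dd p ^+ 2 + Pyn p ^+ 2.
Definition gx p j := (PX p j * Pyn p - PY p j * dd p) / (DD p * c).
Definition gy p j := - (PX p j * dd p + PY p j * Pyn p) / (DD p * c).
Definition gz p := a - (2 * Pyn p / DD p) / (2 * c ^+ 2).
Definition ginv (p : 'rV[R]_(m.+1 + m.+1)) : V :=
  \row_i match fintype.split i with
         | inl i' => match fintype.split i' with inl j => gx p j | inr j => gy p j end
         | inr _ => gz p end.

Lemma ginv_x p j : xq (ginv p) j = gx p j.
Proof. by rewrite /xq mxE /ix !split_l. Qed.
Lemma ginv_y p j : yq (ginv p) j = gy p j.
Proof. by rewrite /yq mxE /iy split_l split_r. Qed.
Lemma ginv_z p : ginv p ord0 iz = gz p.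
Proof. by rewrite mxE /iz split_r. Qed.

Lemma coord_eq (w w' : V) : (forall j, xq w j = xq w' j) -> (forall j, yq w j = yq w' j) ->
  w ord0 iz = w' ord0 iz -> w = w'.
Proof.
move=> hx hy hz; apply/rowP => i.
rewrite -(splitK i); case: (fintype.split i) => [i'|k] /=.
- rewrite -(splitK i'); case: (fintype.split i') => j /=; [exact: hx|exact: hy].
- by rewrite (ord1 k).
Qed.

Lemma PX_hh q j : PX (hh q) j = ev (XE j) q.
Proof. by rewrite /PX hh_ev /EE split_l unlift_w. Qed.
Lemma PY_hh q j : PY (hh q) j = ev (YE j) q.
Proof. by rewrite /PY hh_ev /EE split_r unlift_w. Qed.
Lemma Pxn_hh q : Pxn (hh q) = ev XnE q.
Proof. by rewrite /Pxn hh_ev /EE split_l unlift_none. Qed.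
Lemma Pyn_hh q : Pyn (hh q) = ev YnE q.
Proof. by rewrite /Pyn hh_ev /EE split_r unlift_none. Qed.

Lemma dd_hh q : dd (hh q) = 2 * (1 + ev VE q) / ev QE q.
Proof.
have hQ := ev_QE_neq0 q.
rewrite /dd Pxn_hh /=; rewrite /= in hQ; field; exact hQ.
Qed.

Lemma DD_hh q : DD (hh q) = 4 / ev QE q.
Proof.
have hQ := ev_QE_neq0 q.
rewrite /DD dd_hh Pyn_hh /=; rewrite /= in hQ; field; exact hQ.
Qed.

Lemma c_neq0 : c != 0.
Proof. by rewrite gt_eqF. Qed.

Lemma ginv_hh q : ginv (hh q) = q.
Proof.
have hQ := ev_QE_neq0 q.
have c0 := c_neq0.
have n4 : (4:R) != 0 by rewrite pnatr_eq0.
apply: coord_eq => [j|j|].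
- rewrite ginv_x /gx DD_hh dd_hh PX_hh PY_hh Pyn_hh /=; rewrite /= in hQ; rewrite /xq; field.
  by rewrite hQ c0.
- rewrite ginv_y /gy DD_hh dd_hh PX_hh PY_hh Pyn_hh /=; rewrite /= in hQ; rewrite /yq; field.
  by rewrite hQ c0.
- rewrite ginv_z /gz DD_hh Pyn_hh /=; rewrite /= in hQ; field.
  by rewrite hQ c0.
Qed.


Lemma hh_inj q1 q2 : hh q1 = hh q2 -> q1 = q2.
Proof. by move=> e; rewrite -(ginv_hh q1) e ginv_hh. Qed.

Section Surj.
Variable p : 'rV[R]_(m.+1 + m.+1).
Hypothesis hs : sqnorm p = 1.
Hypothesis hd : 0 < dd p.

Lemma DD_neq0 : dd p ^+ 2 + Pyn p ^+ 2 != 0.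
Proof.
have h1 : 0 < dd p ^+ 2 by exact: exprn_gt0.
have h2 : 0 <= Pyn p ^+ 2 by exact: sqr_ge0.
by rewrite gt_eqF // ltr_wpDr.
Qed.

Lemma gsq j : gx p j ^+ 2 + gy p j ^+ 2 = (PX p j ^+ 2 + PY p j ^+ 2) / (DD p * c ^+ 2).
Proof.
have hD := DD_neq0; have c0 := c_neq0.
rewrite /gx /gy /DD; field; by rewrite hD c0.
Qed.

Lemma g_VE : ev VE (ginv p) = 2 * dd p / DD p - 1.
Proof.
rewrite VE_ev sq_split.
under eq_bigr do rewrite ginv_x ginv_y gsq.
rewrite -mulr_suml.
have e : \sum_(j < m) (PX p j ^+ 2 + PY p j ^+ 2) = 1 - Pxn p ^+ 2 - Pyn p ^+ 2.
  by rewrite -hs sq_out; ring.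
rewrite e.
have hD := DD_neq0; have c0 := c_neq0.
rewrite /DD /dd; rewrite /dd in hD; field; by rewrite hD c0.
Qed.

Lemma g_tE : ev tE (ginv p) = 2 * Pyn p / DD p.
Proof.
have hD := DD_neq0; have c0 := c_neq0.
rewrite /= -/iz ginv_z /gz; rewrite /DD; field; by rewrite hD c0.
Qed.

Lemma Q_g : ev tE (ginv p) * ev tE (ginv p) + (1 + ev VE (ginv p)) * (1 + ev VE (ginv p)) = 4 / DD p.
Proof.
rewrite g_VE g_tE.
have hD := DD_neq0.
rewrite /DD /dd; rewrite /dd in hD; field; by rewrite hD.
Qed.

Lemma XE_shape q j : ev (XE j) q = 2 * ((c * xq q j * ev tE q + - c * yq q j * (1 + ev VE q)) /
   (ev tE q * ev tE q + (1 + ev VE q) * (1 + ev VE q))).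
Proof. by []. Qed.
Lemma YE_shape q j : ev (YE j) q = 2 * ((- c * yq q j * ev tE q + -1 * (c * xq q j * (1 + ev VE q))) /
   (ev tE q * ev tE q + (1 + ev VE q) * (1 + ev VE q))).
Proof. by []. Qed.
Lemma XnE_shape q : ev XnE q = (1 + -1 * (ev VE q * ev VE q + ev tE q * ev tE q)) /
   (ev tE q * ev tE q + (1 + ev VE q) * (1 + ev VE q)).
Proof. by []. Qed.
Lemma YnE_shape q : ev YnE q = 2 * ev tE q /
   (ev tE q * ev tE q + (1 + ev VE q) * (1 + ev VE q)).
Proof. by []. Qed.

Lemma n4 : (4:R) != 0.
Proof. by rewrite pnatr_eq0. Qed.

Lemma hh_ginv_PX j : PX (hh (ginv p)) j = PX p j.
Proof.
rewrite PX_hh XE_shape Q_g g_VE g_tE ginv_x ginv_y /gx /gy.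
have hD := DD_neq0; have c0 := c_neq0; have h4 := n4.
rewrite /DD /dd; rewrite /dd in hD; field; by rewrite ?hD ?c0 ?h4.
Qed.
Lemma hh_ginv_PY j : PY (hh (ginv p)) j = PY p j.
Proof.
rewrite PY_hh YE_shape Q_g g_VE g_tE ginv_x ginv_y /gx /gy.
have hD := DD_neq0; have c0 := c_neq0; have h4 := n4.
rewrite /DD /dd; rewrite /dd in hD; field; by rewrite ?hD ?c0 ?h4.
Qed.
Lemma hh_ginv_Pxn : Pxn (hh (ginv p)) = Pxn p.
Proof.
rewrite Pxn_hh XnE_shape Q_g g_VE g_tE.
have hD := DD_neq0; have h4 := n4.
rewrite /DD /dd; rewrite /dd in hD; field; by rewrite ?hD ?h4.
Qed.
Lemma hh_ginv_Pyn : Pyn (hh (ginv p)) = Pyn p.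
Proof.
rewrite Pyn_hh YnE_shape Q_g g_tE.
have hD := DD_neq0; have h4 := n4.
rewrite /DD /dd; rewrite /dd in hD; field; by rewrite ?hD ?h4.
Qed.

End Surj.

Lemma lift_w (j : 'I_m) : lift ord_max j = widen_ord (leqnSn m) j.
Proof. by apply: ord_inj; rewrite lift_max. Qed.

Lemma coord_out (p p' : 'rV[R]_(m.+1 + m.+1)) :
  (forall j, PX p j = PX p' j) -> (forall j, PY p j = PY p' j) ->
  Pxn p = Pxn p' -> Pyn p = Pyn p' -> p = p'.
Proof.
move=> hx hy hxn hyn; apply/rowP => i.
rewrite -(splitK i); case: (fintype.split i) => j /=;
  case: (unliftP ord_max j) => [j'|] ->; rewrite ?lift_w //.
- exact: hx.
- exact: hy.
Qed.

Lemma hh_ginv p : sqnorm p = 1 -> 0 < dd p -> hh (ginv p) = p.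
Proof.
move=> hs hd; apply: coord_out => [j|j||].
- exact: hh_ginv_PX.
- exact: hh_ginv_PY.
- exact: hh_ginv_Pxn.
- exact: hh_ginv_Pyn.
Qed.

Lemma widen_neq (j : 'I_m) : (widen_ord (leqnSn m) j == ord_max) = false.
Proof. by rewrite -val_eqE /= ltn_eqF. Qed.

Lemma pole_PX j : PX (pole_minus m : 'rV[R]_(m.+1 + m.+1)) j = 0.
Proof. by rewrite /PX /pole_minus mxE eq_lshift widen_neq. Qed.
Lemma pole_PY j : PY (pole_minus m : 'rV[R]_(m.+1 + m.+1)) j = 0.
Proof. by rewrite /PY /pole_minus mxE eq_rlshift. Qed.
Lemma pole_Pxn : Pxn (pole_minus m : 'rV[R]_(m.+1 + m.+1)) = -1.
Proof. by rewrite /Pxn /pole_minus mxE eqxx. Qed.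
Lemma pole_Pyn : Pyn (pole_minus m : 'rV[R]_(m.+1 + m.+1)) = 0.
Proof. by rewrite /Pyn /pole_minus mxE eq_rlshift. Qed.

Lemma pole_bd : bdD m (pole_minus m : 'rV[R]_(m.+1 + m.+1)).
Proof.
split; last exact: pole_Pyn.
rewrite sq_out; under eq_bigr do rewrite pole_PX pole_PY.
by rewrite pole_Pxn pole_Pyn big1 => [|j _]; rewrite ?expr0n /=; ring.
Qed.

Lemma dist_pole p : sqnorm p = 1 -> sqnorm (p - pole_minus m) = 2 * dd p.
Proof.
move=> hs.
have eX j : PX (p - pole_minus m) j = PX p j by rewrite /PX !mxE eq_lshift widen_neq subr0.
have eY j : PY (p - pole_minus m) j = PY p j by rewrite /PY !mxE eq_rlshift subr0.
have eXn : Pxn (p - pole_minus m) = Pxn p + 1 by rewrite /Pxn !mxE eqxx opprK.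
have eYn : Pyn (p - pole_minus m) = Pyn p by rewrite /Pyn !mxE eq_rlshift subr0.
rewrite sq_out; under eq_bigr do rewrite eX eY.
rewrite eXn eYn.
have := sq_out p; rewrite hs /dd => e.
have -> : \sum_(j < m) (PX p j ^+ 2 + PY p j ^+ 2) = 1 - Pxn p ^+ 2 - Pyn p ^+ 2.
  by rewrite e; ring.
ring.
Qed.

Lemma cover_pt p (eps : R) : 0 < a -> 0 < eps -> 1 <= c -> 4 / eps ^+ 2 <= c -> 4 / (a * eps ^+ 4) <= c ->
  stdD m p -> eps <= eucl_dist p (pole_minus m) ->
  [/\ cylD m a (ginv p), hh (ginv p) = p & (Pyn p = 0 -> zc (ginv p) = a)].
Proof.
move=> ha he c1 ce ca hp hdist.
have [hs hY] : sqnorm p = 1 /\ 0 <= Pyn p := hp.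
have e2 : eps ^+ 2 <= 2 * dd p.
  move: hdist; rewrite /eucl_dist dist_pole // => h.
  have h0 : 0 <= 2 * dd p by rewrite -dist_pole //; exact: sqnorm_ge0.
  rewrite -(sqr_sqrtr h0) !expr2; apply: ler_pM => //; exact: ltW.
have eps2 : 0 < eps ^+ 2 by exact: exprn_gt0.
have hd : 0 < dd p by lra.
have hd0 : dd p != 0 by rewrite gt_eqF.
have hDp : 0 < DD p by rewrite /DD; have := sqr_ge0 (Pyn p); have := exprn_gt0 2 hd; lra.
have hD0 : DD p != 0 by rewrite gt_eqF.
have hc0 := c_neq0.
have c2 : 0 < c ^+ 2 by exact: exprn_gt0.
have Y1 : Pyn p <= 1.
  have e := sq_out p; rewrite hs in e.
  have s0 : 0 <= \sum_(j < m) (PX p j ^+ 2 + PY p j ^+ 2).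
    by apply: sumr_ge0 => j _; apply: addr_ge0; exact: sqr_ge0.
  have := sqr_ge0 (Pxn p); nra.
split; last first.
- by move=> hY0; rewrite /zc -/iz ginv_z /gz hY0 mulr0 !mul0r subr0.
- exact: hh_ginv.
split.
- have hV := g_VE p hs hd; rewrite VE_ev in hV.
  have i1 : 2 * dd p / DD p <= 2 / dd p.
    rewrite -subr_ge0 (_ : 2 / dd p - 2 * dd p / DD p = 2 * Pyn p ^+ 2 / (dd p * DD p)).
      by apply: divr_ge0; [apply: mulr_ge0 => //; exact: sqr_ge0 | apply: mulr_ge0; exact: ltW].
    by move: hD0; rewrite /DD => hD0; field; rewrite hD0 hd0.
  have i2 : 2 / dd p <= 4 / eps ^+ 2.
    rewrite -subr_ge0 (_ : 4 / eps ^+ 2 - 2 / dd p = 2 * (2 * dd p - eps ^+ 2) / (eps ^+ 2 * dd p)).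
      by apply: divr_ge0; [apply: mulr_ge0 => //; lra | apply: mulr_ge0; exact: ltW].
    by field; rewrite hd0 gt_eqF.
  have i3 : c <= c ^+ 2 by rewrite expr2 -{1}(mulr1 c) ler_pM2l //; lra.
  have : c ^+ 2 * sqnorm (ucomp (ginv p)) <= c ^+ 2 * 1 by rewrite hV; lra.
  by rewrite ler_pM2l.
- have hz : zc (ginv p) = a - Pyn p / (DD p * c ^+ 2).
    rewrite /zc -/iz ginv_z /gz; field; by rewrite hD0 hc0.
  rewrite hz.
  have q0 : 0 <= Pyn p / (DD p * c ^+ 2) by apply: divr_ge0 => //; apply: mulr_ge0; exact: ltW.
  apply/andP; split; last by lra.
  rewrite subr_ge0 ler_pdivrMr; last by apply: mulr_gt0.
  have hdd : eps ^+ 2 / 2 <= dd p by lra.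
  have D1 : (eps ^+ 2 / 2) * (eps ^+ 2 / 2) <= DD p.
    have := ler_pM (ltW (divr_gt0 eps2 (ltr0Sn _ 1))) (ltW (divr_gt0 eps2 (ltr0Sn _ 1))) hdd hdd.
    by rewrite /DD; have := sqr_ge0 (Pyn p); rewrite !expr2; lra.
  have i3 : c <= c ^+ 2 by rewrite expr2 -{1}(mulr1 c) ler_pM2l //; lra.
  have c4 : 4 / (a * eps ^+ 4) <= c ^+ 2 by lra.
  have P1 : (eps ^+ 2 / 2) * (eps ^+ 2 / 2) * (4 / (a * eps ^+ 4)) <= DD p * c ^+ 2.
    apply: ler_pM => //; first by apply: mulr_ge0; apply: divr_ge0; lra.
    by apply: divr_ge0; [lra| apply: mulr_ge0; [lra | apply: exprn_ge0; lra]].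
  have P2 : a * ((eps ^+ 2 / 2) * (eps ^+ 2 / 2) * (4 / (a * eps ^+ 4))) = 1.
    by field; rewrite !gt_eqF.
  have : a * ((eps ^+ 2 / 2) * (eps ^+ 2 / 2) * (4 / (a * eps ^+ 4))) <= a * (DD p * c ^+ 2).
    by rewrite ler_pM2l.
  rewrite P2; lra.
Qed.

End Constr.

Theorem lemma7p5 (R : realType) (m : nat) (a : R) (ha : 0 < a) :
  forall eps : R, 0 < eps ->
  exists h : 'rV[R]_((m + m) + 1) -> 'rV[R]_(m.+1 + m.+1),
    [/\ contact_embedding m a h,
        h @` cyl_top m a `<=` bdD m,
        (forall p, bdD m p -> ~ (h @` cyl_top m a) p -> eucl_dist p (pole_minus m) < eps) &
        (forall p, stdD m p -> ~ (h @` cylD m a) p ->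
           exists2 b, bdD m b & eucl_dist p b < eps)].
Proof.
move=> eps he.
pose c : R := 1 + 4 / eps ^+ 2 + 4 / (a * eps ^+ 4).
have t1 : 0 <= 4 / eps ^+ 2 by apply: divr_ge0 => //; apply: exprn_ge0; exact: ltW.
have t2 : 0 <= 4 / (a * eps ^+ 4).
  by apply: divr_ge0 => //; apply: mulr_ge0; [exact: ltW| apply: exprn_ge0; exact: ltW].
have c1 : 1 <= c by rewrite /c; lra.
have hc : 0 < c by lra.
have ce : 4 / eps ^+ 2 <= c by rewrite /c; lra.
have ca : 4 / (a * eps ^+ 4) <= c by rewrite /c; lra.
exists (hh R m a c).
split.
- split.
  + exists setT; split; first exact: openT.
    split => // k; exact: (hv_Ck k _ (wfEE R m a c)).
  + by move=> q1 q2 _ _; exact: hh_inj.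
  + by move=> q _ w; exact: immersion.
  + move=> _ [q [hu /andP [hz0 hz1]] <-]; split; first exact: hh_sphere.
    exact: hh_Yn.
  + move=> q _ w; rewrite contact; split => [|->]; last by rewrite mulr0.
    apply: mul0_cancel.
    have hQ := ev_QE_neq0 R m a c q.
    by rewrite mulf_neq0 // ?invr_eq0 // mulf_neq0 // ?expf_neq0 ?gt_eqF // ?oppr_eq0 ?pnatr_eq0.
- move=> _ [q [hu hz] <-]; split; first exact: hh_sphere.
  exact: hh_top.
- move=> p hp hn; case: (ltP (eucl_dist p (pole_minus m)) eps) => // hle.
  exfalso; apply: hn.
  have hp' : stdD m p by case: hp => h1 h2; split => //; rewrite h2.
  have [[hu hz] heq htop] := cover_pt R m a c hc p eps ha he c1 ce ca hp' hle.
  exists (ginv R m a c p); last exact: heq.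
  split => //; apply: htop; by case: hp.
- move=> p hp hn; case: (ltP (eucl_dist p (pole_minus m)) eps) => hle.
    by exists (pole_minus m) => //; exact: pole_bd.
  exfalso; apply: hn.
  have [hcyl heq htop] := cover_pt R m a c hc p eps ha he c1 ce ca hp hle.
  by exists (ginv R m a c p).
Qed.
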